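(* Let $G$ be a finite group and $S$ one of the Mathieu groups $M_{11}, M_{12}, M_{22}, M_{23}, M_{24}$. If $|G| = |S|$, then $G$ is neither a Frobenius group nor a 2-Frobenius group.
   Context: A finite group $G$ is a 2-Frobenius group if it has a normal series $1 \trianglelefteq A \trianglelefteq B \trianglelefteq G$ such that $B$ is a Frobenius group with Frobenius kernel $A$ and $G/A$ is a Frobenius group with Frobenius kernel $B/A$. Orders: $|M_{11}|=2^4\cdot3^2\cdot5\cdot11$, $|M_{12}|=2^6\cdot3^3\cdot5\cdot11$, $|M_{22}|=2^7\cdot3^2\cdot5\cdot7\cdot11$, $|M_{23}|=2^7\cdot3^2\cdot5\cdot7\cdot11\cdot23$, $|M_{24}|=2^{10}\cdot3^3\cdot5\cdot7\cdot11\cdot23$. *)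

(* Defs.v *)
From mathcomp Require Import all_boot all_fingroup all_solvable frobenius.
Set Implicit Arguments. Unset Strict Implicit. Unset Printing Implicit Defensive.
Local Open Scope group_scope.

Definition mathieu_orders : seq nat :=
  [:: 2^4 * 3^2 * 5 * 11;
      2^6 * 3^3 * 5 * 11;
      2^7 * 3^2 * 5 * 7 * 11;
      2^7 * 3^2 * 5 * 7 * 11 * 23;
      2^10 * 3^3 * 5 * 7 * 11 * 23]%N.

Definition two_Frobenius (gT : finGroupType) (G : {group gT}) : Prop :=
  exists (A B : {group gT}),
    [/\ A <| G, B <| G, A \subset B,
        [Frobenius B with kernel A]
      & [Frobenius (G / A) with kernel (B / A)]].

(* Main.v *)
Require Import Defs.
From mathcomp Require Import all_boot all_fingroup all_solvable frobenius.
From mathcomp Require Import vcharacter.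
Set Implicit Arguments. Unset Strict Implicit. Unset Printing Implicit Defensive.

Definition entry := ((nat * nat) * (nat * nat))%type.

Fixpoint choices (T : Type) (o : seq (seq T)) : seq (seq T) :=
  if o is s :: o' then flatten [seq [seq x :: v | v <- choices o'] | x <- s]
  else [:: [::]].

Definition opt2 (x : nat * nat) : seq entry :=
  (x, (0, x.2)) :: [seq (x, (i, 0)) | i <- iota 0 x.2.+1].
Definition opt1 (x : nat * nat) : seq entry := [:: (x, (x.2, 0)); (x, (0, x.2))].

Definition bad2 (Z : seq entry) :=
  [&& has (fun z => 0 < z.2.1) Z, has (fun z => 0 < z.2.2) Z,
      has (fun z => 0 < z.1.2 - z.2.1 - z.2.2) Z &
      all (fun z => all (fun w =>
        (w.1.1 ^ w.2.2 %| (z.1.1 ^ z.2.1).-1) &&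
        (w.1.1 ^ (w.1.2 - w.2.1 - w.2.2) %| (z.1.1 ^ z.2.2).-1)) Z) Z].

Definition bad1 (Z : seq entry) :=
  [&& has (fun z => 0 < z.2.1) Z, has (fun z => 0 < z.2.2) Z &
      all (fun z => all (fun w => w.1.1 ^ w.2.2 %| (z.1.1 ^ z.2.1).-1) Z) Z].

Definition check (D : seq (nat * nat)) :=
  all (fun Z => ~~ bad2 Z) (choices (map opt2 D)) &&
  all (fun Z => ~~ bad1 Z) (choices (map opt1 D)).

Definition prodD (D : seq (nat * nat)) := foldr (fun x m => x.1 ^ x.2 * m) 1 D.
Definition sumD p (D : seq (nat * nat)) :=
  foldr (fun y s => (if y.1 == p then y.2 else 0) + s) 0 D.
Definition primesD (D : seq (nat * nat)) := all (fun x => prime x.1) D.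

Lemma prodD_gt0 D : primesD D -> 0 < prodD D.
Proof.
elim: D => // x D IH /andP[px pD].
change (0 < x.1 ^ x.2 * prodD D).
by rewrite muln_gt0 expn_gt0 prime_gt0 // IH.
Qed.

Lemma logn_prodD D p : primesD D -> logn p (prodD D) = sumD p D.
Proof.
elim: D => [|x D IH]; first by rewrite /= logn1.
case/andP=> px pD.
change (logn p (x.1 ^ x.2 * prodD D) = (if x.1 == p then x.2 else 0) + sumD p D).
rewrite lognM ?prodD_gt0 ?expn_gt0 ?prime_gt0 // IH // lognX logn_prime //.
by rewrite eq_sym; case: eqP => _; rewrite ?muln1 ?muln0.
Qed.

Lemma dvd_prodD D p : primesD D -> prime p -> p %| prodD D -> p \in map fst D.
Proof.
move=> + pp; elim: D => [|x D IH]; first by rewrite /= dvdn1 => _ /eqP p1; rewrite p1 in pp.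
case/andP=> px pD.
change (p %| x.1 ^ x.2 * prodD D -> p \in x.1 :: map fst D).
rewrite Euclid_dvdM // Euclid_dvdX // dvdn_prime2 //.
rewrite inE; case/orP => [/andP[-> _] //| /(IH pD) ->]; by rewrite orbT.
Qed.

Lemma has_logn D m : primesD D -> m %| prodD D -> 1 < m ->
  has (fun x => 0 < logn x.1 m) D.
Proof.
move=> pD mD m1.
have pp := pdiv_prime m1.
have pm := pdiv_dvd m.
have /mapP[x xD ex] := dvd_prodD pD pp (dvdn_trans pm mD).
apply/hasP; exists x => //; rewrite -ex logn_gt0 mem_primes pp pm.
by rewrite (ltn_trans _ m1).
Qed.

Lemma mem_choices (T : eqType) (o : seq (seq T)) (v : seq T) :
  all2 (fun y s => y \in s) v o -> v \in choices o.
Proof.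
elim: o v => [|s o IH] [|y v] //= /andP[ys /IH vo].
by apply/flattenP; exists [seq y :: w | w <- choices o]; [apply: map_f | apply: map_f].
Qed.

Lemma all2_map (A : eqType) (T : eqType) (D : seq A) (f : A -> T) (g : A -> seq T) :
  (forall x, x \in D -> f x \in g x) -> all2 (fun y s => y \in s) (map f D) (map g D).
Proof.
elim: D => //= x D IH H; rewrite H ?mem_head // IH // => y yD.
by apply: H; rewrite inE yD orbT.
Qed.

Lemma coprime_logn a b p : coprime a b -> prime p -> 0 < logn p a -> logn p b = 0.
Proof.
move=> cab pp la; apply/eqP; rewrite eqn0Ngt; apply/negP => lb.
move: la lb; rewrite !logn_gt0 !mem_primes => /and3P[_ _ pa] /and3P[_ _ pb].
have : p %| gcdn a b by rewrite dvdn_gcd pa pb.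
by rewrite (eqP cab) dvdn1 => /eqP p1; rewrite p1 in pp.
Qed.

Lemma logn3 D a b c x : primesD D -> a * b * c = prodD D -> 0 < a -> 0 < b -> 0 < c ->
  x \in D -> all (fun x => sumD x.1 D == x.2) D ->
  x.2 = logn x.1 a + logn x.1 b + logn x.1 c.
Proof.
move=> pD e a0 b0 c0 xD sD.
by rewrite -!lognM ?muln_gt0 ?a0 ?b0 // e logn_prodD // (eqP (allP sD x xD)).
Qed.

Lemma no2 D a b c : primesD D -> all (fun x => sumD x.1 D == x.2) D ->
  all (fun Z => ~~ bad2 Z) (choices (map opt2 D)) ->
  a * b * c = prodD D -> coprime a b -> coprime b c -> 1 < a -> 1 < b -> 1 < c ->
  (forall r p, prime r -> prime p -> b`_r %| (a`_p).-1) ->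
  (forall r p, prime r -> prime p -> c`_r %| (b`_p).-1) -> False.
Proof.
move=> pD sD chk e cab cbc a1 b1 c1 dab dbc.
have a0 : 0 < a by apply: ltnW.
have b0 : 0 < b by apply: ltnW.
have c0 : 0 < c by apply: ltnW.
have dvdA : a %| prodD D by rewrite -e -mulnA dvdn_mulr.
have dvdB : b %| prodD D by rewrite -e (mulnC a) -mulnA dvdn_mulr.
have dvdC : c %| prodD D by rewrite -e dvdn_mull.
pose Z0 := [seq (x, (logn x.1 a, logn x.1 b)) | x <- D].
have : Z0 \in choices (map opt2 D).
  apply: mem_choices; apply: all2_map => x xD.
  have ex := logn3 pD e a0 b0 c0 xD sD.
  have px : prime x.1 := allP pD x xD.
  rewrite /opt2 inE; case: (posnP (logn x.1 b)) => lb.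
    apply/orP; right; apply/mapP; exists (logn x.1 a); last by rewrite lb.
    by rewrite mem_iota add0n ltnS ex lb addn0 leq_addr.
  rewrite (coprime_logn cbc px lb) addn0 in ex.
  rewrite coprime_sym in cab.
  have la := coprime_logn cab px lb.
  by rewrite ex la add0n eqxx.
move/(allP chk); apply/negP/negPn.
have cx : forall x, x \in D -> x.2 - logn x.1 a - logn x.1 b = logn x.1 c.
  move=> x xD; rewrite (logn3 pD e a0 b0 c0 xD sD).
  by rewrite -addnA addKn addKn.
apply/and4P; split.
- by rewrite has_map; apply: has_logn.
- by rewrite has_map; apply: has_logn.
- rewrite has_map; have := has_logn pD dvdC c1.
  by move/hasP=> [x xD lx]; apply/hasP; exists x => //=; rewrite cx.
apply/allP => _ /mapP[x xD ->]; apply/allP => _ /mapP[y yD ->] /=.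
have px : prime x.1 := allP pD x xD.
have py : prime y.1 := allP pD y yD.
by rewrite cx // -!p_part dab // dbc.
Qed.

Lemma no1 D k h : primesD D -> all (fun x => sumD x.1 D == x.2) D ->
  all (fun Z => ~~ bad1 Z) (choices (map opt1 D)) ->
  k * h = prodD D -> coprime k h -> 1 < k -> 1 < h ->
  (forall r p, prime r -> prime p -> h`_r %| (k`_p).-1) -> False.
Proof.
move=> pD sD chk e ckh k1 h1 dkh.
have k0 : 0 < k by apply: ltnW.
have h0 : 0 < h by apply: ltnW.
have dvdK : k %| prodD D by rewrite -e dvdn_mulr.
have dvdH : h %| prodD D by rewrite -e dvdn_mull.
pose Z0 := [seq (x, (logn x.1 k, logn x.1 h)) | x <- D].
have : Z0 \in choices (map opt1 D).
  apply: mem_choices; apply: all2_map => x xD.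
  have ex := logn3 pD (etrans (muln1 _) e) k0 h0 (ltnSn 0) xD sD.
  rewrite logn1 addn0 in ex.
  have px : prime x.1 := allP pD x xD.
  rewrite /opt1 !inE; case: (posnP (logn x.1 h)) => lh.
    by rewrite ex lh addn0 eqxx.
  rewrite coprime_sym in ckh.
  by rewrite ex (coprime_logn ckh px lh) add0n eqxx orbT.
move/(allP chk); apply/negP/negPn.
apply/and3P; split.
- by rewrite has_map; apply: has_logn.
- by rewrite has_map; apply: has_logn.
apply/allP => _ /mapP[x xD ->]; apply/allP => _ /mapP[y yD ->] /=.
have px : prime x.1 := allP pD x xD.
have py : prime y.1 := allP pD y yD.
by rewrite -!p_part dkh.
Qed.

Lemma prodD4 a b c d x y :
  a ^ x * b ^ y * c * d = prodD [:: (a, x); (b, y); (c, 1); (d, 1)].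
Proof. by rewrite /prodD /= !expn1 muln1 !mulnA. Qed.

Lemma prodD5 a b c d e x y :
  a ^ x * b ^ y * c * d * e = prodD [:: (a, x); (b, y); (c, 1); (d, 1); (e, 1)].
Proof. by rewrite /prodD /= !expn1 muln1 !mulnA. Qed.

Lemma prodD6 a b c d e f x y :
  a ^ x * b ^ y * c * d * e * f =
  prodD [:: (a, x); (b, y); (c, 1); (d, 1); (e, 1); (f, 1)].
Proof. by rewrite /prodD /= !expn1 muln1 !mulnA. Qed.

Lemma mathieu_D n : n \in mathieu_orders -> exists D, [/\ n = prodD D, primesD D,
  all (fun x => sumD x.1 D == x.2) D,
  all (fun Z => ~~ bad2 Z) (choices (map opt2 D)) &
  all (fun Z => ~~ bad1 Z) (choices (map opt1 D))].
Proof.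
rewrite /mathieu_orders !in_cons in_nil.
case/orP=> [/eqP -> | ].
  exists [:: (2,4); (3,2); (5,1); (11,1)]; split; [exact: prodD4 | by vm_compute..].
case/orP=> [/eqP -> | ].
  exists [:: (2,6); (3,3); (5,1); (11,1)]; split; [exact: prodD4 | by vm_compute..].
case/orP=> [/eqP -> | ].
  exists [:: (2,7); (3,2); (5,1); (7,1); (11,1)]; split; [exact: prodD5 | by vm_compute..].
case/orP=> [/eqP -> | /orP [/eqP -> | //]].
  exists [:: (2,7); (3,2); (5,1); (7,1); (11,1); (23,1)]; split; [exact: prodD6 | by vm_compute..].
exists [:: (2,10); (3,3); (5,1); (7,1); (11,1); (23,1)]; split; [exact: prodD6 | by vm_compute..].
Qed.

Local Open Scope group_scope.
Lemma frob_index_dvd_norm (gT : finGroupType) (G K : {group gT}) (P : {group gT}) p :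
  K <| G -> p.-Sylow(K) P -> #|G : K| %| #|'N_G(P)|.
Proof.
move=> nsKG sylP.
have frat := Frattini_arg nsKG sylP.
have := mul_cardG K 'N_G(P); rewrite frat -(Lagrange (normal_sub nsKG)).
rewrite -mulnA => /eqP; rewrite eqn_pmul2l ?cardG_gt0 // => /eqP ->.
exact: dvdn_mulr.
Qed.

Lemma frob_sylow_cond (gT : finGroupType) (G K : {group gT}) (r p : nat) :
  [Frobenius G with kernel K] -> prime r -> #|G : K|`_r %| (#|K|`_p).-1.
Proof.
move=> frobG pr_r.
have [ntK ltKG nsKG regK] := Frobenius_kerP frobG.
have cop := Frobenius_ker_coprime frobG.
have [rK | rK] := boolP (r %| #|G : K|); last first.
  by rewrite part_p'nat ?dvd1n // p'natE.
have r'K : r^'.-nat #|K|.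
  rewrite p'natE //; apply: contraL cop => rK'.
  rewrite /coprime; apply/negP=> /eqP g1; have := dvdn_gcd r #|K| #|G : K|.
  by rewrite rK' rK g1 dvdn1 => /eqP r1; rewrite r1 in pr_r.
have [P sylP] := Sylow_exists p K.
have [Q sylQ] := Sylow_exists r 'N_G(P).
have dQ : #|G : K|`_r %| #|Q|.
  by rewrite (card_Hall sylQ) partn_dvd // (frob_index_dvd_norm nsKG sylP).
apply: dvdn_trans dQ _; rewrite -(card_Hall sylP).
have [sQN rQ _] := and3P sylQ.
have sQG : Q \subset G := subset_trans sQN (subsetIl _ _).
have nPQ : Q \subset 'N(P) := subset_trans sQN (subsetIr _ _).
apply: regular_norm_dvd_pred nPQ _.
move=> x /setD1P[ntx Qx]; apply/trivgP/subsetP=> y /setIP[Py cxy].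
apply: contraR ntx => nty.
have K1y : y \in K^# by rewrite inE nty (subsetP (pHall_sub sylP)).
have xK : x \in K.
  by apply: (subsetP (regK y K1y)); rewrite inE (subsetP sQG) // cent1C.
have rx : r.-elt x := mem_p_elt rQ Qx.
have r'x : r^'.-elt x := pnat_dvd (order_dvdG xK) r'K.
by rewrite -order_eq1 (pnat_1 rx r'x).
Qed.


Theorem lemma2p8 (gT : finGroupType) (G : {group gT}) :
  #|G| \in mathieu_orders ->
  ~~ [Frobenius G] /\ ~ two_Frobenius G.
Proof.
move=> HG; have [D [eD pD sD c2 c1]] := mathieu_D HG; split.
  apply/negP => /existsP [H frobH].
  have [K frobK] := Frobenius_kernel_exists frobH.
  have frobGK := FrobeniusWker frobK.
  have [ntK ltKG nsKG _] := Frobenius_kerP frobGK.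
  apply: (no1 pD sD c1 (k := #|K|) (h := #|G : K|)).
  - by rewrite Lagrange ?normal_sub.
  - exact: Frobenius_ker_coprime frobGK.
  - by rewrite cardG_gt1.
  - by rewrite indexg_gt1 proper_subn.
  - by move=> r p pr _; apply: frob_sylow_cond.
case=> [A [B [nAG nBG sAB frobB frobGA]]].
have nAB : B \subset 'N(A) := subset_trans (normal_sub nBG) (normal_norm nAG).
have [ntA ltAB _ _] := Frobenius_kerP frobB.
have [ntBA ltBAGA _ _] := Frobenius_kerP frobGA.
apply: (no2 pD sD c2 (a := #|A|) (b := #|B / A|) (c := #|(G / A) : (B / A)|)).
- rewrite -mulnA Lagrange ?quotientS ?normal_sub // card_quotient ?normal_norm //.
  by rewrite Lagrange ?normal_sub.
- by rewrite card_quotient //; apply: Frobenius_ker_coprime frobB.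
- exact: Frobenius_ker_coprime frobGA.
- by rewrite cardG_gt1.
- by rewrite cardG_gt1.
- by rewrite indexg_gt1 proper_subn.
- by move=> r p pr _; rewrite card_quotient //; apply: frob_sylow_cond.
- by move=> r p pr _; apply: frob_sylow_cond.
Qed.
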